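(* Let $P$ be a pmf on a finite set $\mathcal{X}$ with $P(x)>0$ for all $x$, and for $(z,Q)\in\mathcal{G}$ let $$c_P(z,Q)=\sum_{x\in\mathcal{X}}g_{z,Q,P}(x)\log_2\frac{\sum_{x'}g_{z,Q,P}(x')}{g_{z,Q,P}(x)}\quad(0\log(a/0)=0).$$ Then on $\mathcal{G}$, $c_P(z,Q)$ is concave in $Q$ for each fixed $z$ and concave in $z$ for each fixed $Q$.
   Context: $g_{z,Q,P}(x)=\big(1-\frac{z^2}{2}\big)P(x)+z\sqrt{Q(x)P(x)}$. $\mathcal{G}=\{(z,Q): z\ge0,\ Q \text{ a pmf on }\mathcal{X},\ g_{z,Q,P}(x)\ge0\ \forall x\in\mathcal{X}\}$ (for fixed $z$, resp. fixed $Q$, the corresponding section of $\mathcal{G}$ is convex). *)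

(* Defs.v *)
From Stdlib Require Import Reals Lra.
Open Scope R_scope.

(* The finite alphabet X is {0, ..., n-1}; functions on X are nat -> R,
   only their values on 0..n-1 matter. *)

Fixpoint sumX (n : nat) (f : nat -> R) : R :=
  match n with
  | O => 0
  | S m => sumX m f + f m
  end.

Definition is_pmf (n : nat) (f : nat -> R) : Prop :=
  (forall x, (x < n)%nat -> 0 <= f x) /\ sumX n f = 1.

Definition log2 (x : R) : R := ln x / ln 2.

Definition gfun (z : R) (Q P : nat -> R) (x : nat) : R :=
  (1 - z ^ 2 / 2) * P x + z * sqrt (Q x * P x).

Definition inG (n : nat) (P : nat -> R) (z : R) (Q : nat -> R) : Prop :=
  0 <= z /\ is_pmf n Q /\ (forall x, (x < n)%nat -> 0 <= gfun z Q P x).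

Definition xlogterm (a s : R) : R :=
  if Req_EM_T a 0 then 0 else a * log2 (s / a).

Definition cP (n : nat) (P : nat -> R) (z : R) (Q : nat -> R) : R :=
  let S := sumX n (gfun z Q P) in
  sumX n (fun x => xlogterm (gfun z Q P x) S).

Definition mixfun (t : R) (Q1 Q2 : nat -> R) (x : nat) : R :=
  t * Q1 x + (1 - t) * Q2 x.

(* Main.v *)
Require Import Defs.
From Stdlib Require Import Reals.
From Stdlib Require Import Lra Psatz.
Open Scope R_scope.

Lemma sumX_le n (f g : nat -> R) :
  (forall x, (x < n)%nat -> f x <= g x) -> sumX n f <= sumX n g.
Proof.
  induction n as [|m IH]; simpl; intros H; [lra|].
  assert (f m <= g m) by (apply H; auto).
  assert (sumX m f <= sumX m g) by (apply IH; intros; apply H; auto).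
  lra.
Qed.

Lemma sumX_lin n (c d : R) (f g : nat -> R) :
  sumX n (fun x => c * f x + d * g x) = c * sumX n f + d * sumX n g.
Proof. induction n as [|m IH]; simpl; [ring|rewrite IH; ring]. Qed.

Lemma sumX_ext n (f g : nat -> R) : (forall x, f x = g x) -> sumX n f = sumX n g.
Proof. intros E; induction n; simpl; [reflexivity| rewrite IHn, E; reflexivity]. Qed.

Lemma sumX_nonneg n f : (forall x, (x < n)%nat -> 0 <= f x) -> 0 <= sumX n f.
Proof.
  induction n as [|m IH]; simpl; intros H; [lra|].
  assert (0 <= f m) by (apply H; auto).
  assert (0 <= sumX m f) by (apply IH; intros; apply H; auto). lra.
Qed.

Lemma term_le_sum n f x : (forall y, (y < n)%nat -> 0 <= f y) -> (x < n)%nat ->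
  f x <= sumX n f.
Proof.
  induction n as [|m IH]; simpl; intros H Hx; [lia|].
  assert (0 <= sumX m f) by (apply sumX_nonneg; intros; apply H; auto).
  assert (0 <= f m) by (apply H; auto).
  destruct (Nat.eq_dec x m) as [->|Hne]; [lra|].
  assert (f x <= sumX m f) by (apply IH; [intros; apply H; auto| lia]). lra.
Qed.

Lemma ln_le_sub1 x : 0 < x -> ln x <= x - 1.
Proof.
  intros Hx. pose proof (exp_ineq1_le (ln x)). rewrite exp_ln in H; lra.
Qed.

Lemma ln_ge0 x : 1 <= x -> 0 <= ln x.
Proof.
  intros Hx. destruct (Req_dec x 1) as [->|Hne]; [rewrite ln_1; lra|].
  pose proof (ln_increasing 1 x ltac:(lra) ltac:(lra)). rewrite ln_1 in H; lra.
Qed.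

Lemma ln_div x y : 0 < x -> 0 < y -> ln (x / y) = ln x - ln y.
Proof.
  intros. unfold Rdiv. rewrite ln_mult, ln_Rinv; try lra.
  apply Rinv_0_lt_compat; lra.
Qed.

Lemma ln2_pos : 0 < ln 2.
Proof. pose proof ln_lt_2. lra. Qed.

Definition H (n : nat) (f : nat -> R) : R :=
  sumX n (fun x => xlogterm (f x) (sumX n f)).

Definition Lw (u : R) (Su : R) : R :=
  if Req_EM_T u 0 then 0 else log2 (Su / u).

Lemma gibbs n (a u : nat -> R) :
  (forall x, (x < n)%nat -> 0 <= a x) ->
  (forall x, (x < n)%nat -> 0 <= u x) ->
  (forall x, (x < n)%nat -> 0 < a x -> 0 < u x) ->
  H n a <= sumX n (fun x => a x * Lw (u x) (sumX n u)).
Proof.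
  intros Ha Hu Hau. unfold H.
  set (Sa := sumX n a). set (Su := sumX n u).
  pose proof ln2_pos as Hl2.
  apply Rle_trans with
    (sumX n (fun x => 1 * (a x * Lw (u x) Su) + (/ ln 2) * (Sa * / Su * u x - a x))).
  - apply sumX_le. intros x Hx.
    assert (HaS : a x <= Sa) by (apply term_le_sum; auto).
    assert (HuS : u x <= Su) by (apply term_le_sum; auto).
    pose proof (Ha x Hx) as Hax. pose proof (Hu x Hx) as Hux.
    unfold xlogterm, Lw, log2.
    destruct (Req_EM_T (a x) 0) as [E|E].
    + rewrite E. destruct (Req_EM_T (u x) 0) as [E2|E2].
      * rewrite E2. lra.
      * assert (0 < Su) by lra.
        assert (0 <= Sa * / Su * u x).
        { apply Rmult_le_pos; [apply Rmult_le_pos; [lra|left; apply Rinv_0_lt_compat; lra]|lra]. }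
        assert (0 <= / ln 2) by (left; apply Rinv_0_lt_compat; lra).
        nra.
    + assert (Hpa : 0 < a x) by lra. pose proof (Hau x Hx Hpa) as Hpu.
      destruct (Req_EM_T (u x) 0) as [E2|E2]; [lra|].
      assert (0 < Su) by lra. assert (0 < Sa) by lra.
      pose proof (ln_le_sub1 (Sa * u x / (a x * Su))
        ltac:(apply Rdiv_lt_0_compat; nra)) as Hln.
      rewrite ln_div in Hln by nra. rewrite !ln_mult in Hln by lra.
      rewrite !ln_div by lra.
      assert (Hk : Sa * u x / (a x * Su) - 1 = (Sa * / Su * u x - a x) / a x)
        by (field; lra).
      rewrite Hk in Hln.
      assert (H4 : a x * (ln Sa + ln (u x) - (ln (a x) + ln Su)) <= Sa * / Su * u x - a x).
      { apply Rmult_le_compat_l with (r := a x) in Hln; [|lra].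
        replace (a x * ((Sa * / Su * u x - a x) / a x)) with (Sa * / Su * u x - a x)
          in Hln by (field; lra). exact Hln. }
      apply Rmult_le_compat_r with (r := / ln 2) in H4;
        [|left; apply Rinv_0_lt_compat; lra].
      unfold Rdiv. nra.
  - rewrite sumX_lin.
    assert (Hs : sumX n (fun x => Sa * / Su * u x - a x) <= 0).
    { rewrite (sumX_ext n (fun x => Sa * / Su * u x - a x)
        (fun x => (Sa * / Su) * u x + (-1) * a x)) by (intros; ring).
      rewrite sumX_lin. fold Su Sa.
      destruct (Req_dec Su 0) as [E|E].
      - rewrite E. rewrite Rinv_0. assert (0 <= Sa) by (apply sumX_nonneg; auto). nra.
      - field_simplify; lra. }
    assert (0 < / ln 2) by (apply Rinv_0_lt_compat; lra).
    nra.
Qed.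

Lemma core n (a b u : nat -> R) (t : R) :
  0 <= t <= 1 ->
  (forall x, (x < n)%nat -> 0 <= a x) ->
  (forall x, (x < n)%nat -> 0 <= b x) ->
  (forall x, (x < n)%nat -> t * a x + (1 - t) * b x <= u x) ->
  t * H n a + (1 - t) * H n b <= H n u.
Proof.
  intros Ht Ha Hb Hu.
  assert (Hu0 : forall x, (x < n)%nat -> 0 <= u x).
  { intros x Hx. specialize (Ha x Hx); specialize (Hb x Hx); specialize (Hu x Hx). nra. }
  set (Su := sumX n u).
  assert (HL : forall x, (x < n)%nat -> 0 <= Lw (u x) Su).
  { intros x Hx. unfold Lw. destruct (Req_EM_T (u x) 0); [lra|].
    pose proof (Hu0 x Hx). assert (u x <= Su) by (apply term_le_sum; auto).
    unfold log2. apply Rmult_le_pos; [|left; apply Rinv_0_lt_compat, ln2_pos].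
    apply ln_ge0. apply Rmult_le_reg_r with (u x); [lra|].
    unfold Rdiv. rewrite Rmult_assoc, Rinv_l; lra. }
  assert (Step1 : sumX n (fun x => t * (a x * Lw (u x) Su) + (1 - t) * (b x * Lw (u x) Su))
                  <= H n u).
  { unfold H. fold Su. apply sumX_le. intros x Hx.
    specialize (HL x Hx). pose proof (Ha x Hx). pose proof (Hb x Hx).
    pose proof (Hu x Hx) as Hux. unfold xlogterm. unfold Lw in *.
    destruct (Req_EM_T (u x) 0) as [E|E].
    - lra.
    - nra. }
  rewrite sumX_lin in Step1.
  assert (G1 : t * H n a <= t * sumX n (fun x => a x * Lw (u x) Su)).
  { destruct (Req_dec t 0) as [E|E]; [rewrite E; lra|].
    apply Rmult_le_compat_l; [lra|]. apply gibbs; auto.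
    intros x Hx Hp. specialize (Hb x Hx). specialize (Hu x Hx). nra. }
  assert (G2 : (1 - t) * H n b <= (1 - t) * sumX n (fun x => b x * Lw (u x) Su)).
  { destruct (Req_dec t 1) as [E|E]; [rewrite E; lra|].
    apply Rmult_le_compat_l; [lra|]. apply gibbs; auto.
    intros x Hx Hp. specialize (Ha x Hx). specialize (Hu x Hx). nra. }
  lra.
Qed.

Lemma sqrt_concave (t p q : R) : 0 <= t <= 1 -> 0 <= p -> 0 <= q ->
  t * sqrt p + (1 - t) * sqrt q <= sqrt (t * p + (1 - t) * q).
Proof.
  intros Ht Hp Hq.
  pose proof (sqrt_pos p). pose proof (sqrt_pos q).
  pose proof (sqrt_sqrt p Hp). pose proof (sqrt_sqrt q Hq).
  rewrite <- (sqrt_pow2 (t * sqrt p + (1 - t) * sqrt q)) by nra.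
  apply sqrt_le_1_alt. simpl.
  assert (0 <= t * (1 - t) * (sqrt p - sqrt q) ^ 2).
  { apply Rmult_le_pos; [nra| apply pow2_ge_0]. }
  nra.
Qed.

Theorem mainTheorem11 (n : nat) (P : nat -> R) :
  is_pmf n P ->
  (forall x, (x < n)%nat -> 0 < P x) ->
  (* concave in Q for each fixed z, on the section of G *)
  (forall (z : R) (Q1 Q2 : nat -> R) (t : R),
     inG n P z Q1 -> inG n P z Q2 -> 0 <= t <= 1 ->
     t * cP n P z Q1 + (1 - t) * cP n P z Q2
       <= cP n P z (mixfun t Q1 Q2)) /\
  (* concave in z for each fixed Q, on the section of G *)
  (forall (Q : nat -> R) (z1 z2 t : R),
     inG n P z1 Q -> inG n P z2 Q -> 0 <= t <= 1 ->
     t * cP n P z1 Q + (1 - t) * cP n P z2 Q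
       <= cP n P (t * z1 + (1 - t) * z2) Q).
Proof.
  intros HP HPpos. split.
  - intros z Q1 Q2 t [Hz [[HQ1 _] Hg1]] [_ [[HQ2 _] Hg2]] Ht.
    apply (core n (gfun z Q1 P) (gfun z Q2 P) (gfun z (mixfun t Q1 Q2) P) t Ht Hg1 Hg2).
    intros x Hx. unfold gfun, mixfun.
    pose proof (HPpos x Hx). pose proof (HQ1 x Hx). pose proof (HQ2 x Hx).
    pose proof (sqrt_concave t (Q1 x * P x) (Q2 x * P x) Ht
                  ltac:(nra) ltac:(nra)) as Hs.
    replace ((t * Q1 x + (1 - t) * Q2 x) * P x) with
      (t * (Q1 x * P x) + (1 - t) * (Q2 x * P x)) by ring.
    nra.
  - intros Q z1 z2 t [Hz1 [_ Hg1]] [Hz2 [_ Hg2]] Ht.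
    apply (core n (gfun z1 Q P) (gfun z2 Q P) (gfun (t * z1 + (1 - t) * z2) Q P) t Ht Hg1 Hg2).
    intros x Hx. unfold gfun.
    pose proof (HPpos x Hx).
    assert (0 <= t * (1 - t) * (z1 - z2) ^ 2 * P x).
    { apply Rmult_le_pos; [apply Rmult_le_pos; [nra|apply pow2_ge_0]|lra]. }
    nra.
Qed.
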